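(* Let $A$ be a non-empty set, $1\le p<\infty$, and let $P\colon\ell_p(A)\to\ell_p(A)$ be a contractive positive projection with constant diagonal $\alpha>0$. Then $n=1/\alpha\in\mathbb{N}$, and there exists a partition $\{A_i\}_i$ of $A$ into sets of size $n$ such that \[P\Big(\sum_{a\in A}\lambda_a e_a\Big)=\alpha\sum_i\Big(\sum_{a\in A_i}\lambda_a\Big)\chi_{A_i}\] whenever $\sum_{a\in A}|\lambda_a|^p<\infty$. In particular, if $A$ is countable, there is an enumeration of $A$ such that the matrix of $P$ is block diagonal with every diagonal block equal to $\alpha\mathbf{1}_n$ and all off-diagonal blocks equal to $\mathbf{0}_n$.
   Context: $\chi_B$ denotes the characteristic function of $B\subseteq A$ and $e_a=\chi_{\{a\}}$. $\mathbf{0}_n$ is the $n\times n$ zero block and $\mathbf{1}_n$ the $n\times n$ block of ones. Contractive means $\|P\|\le 1$; positive projection means linear, $P^2=P$, $P\ge0$. For a Dedekind complete vector lattice $X$, $\mathcal{L}^r(X)$ is the Dedekind complete vector lattice of regular operators; the center (operators $T$ with $\pm T\le\lambda\,\mathrm{id}_X$ for some $\lambda$) is a projection band in it, with band projection $\mathcal{D}$; $T$ has constant diagonal $\alpha$ if $\mathcal{D}(T)=\alpha\,\mathrm{id}_X$. For $X=\ell_p(A)$ this means $(Pe_a)(a)=\alpha$ for all $a\in A$. *)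

(* Defs.v *)
From HB Require Import structures.
From mathcomp Require Import all_boot all_order all_algebra.
From mathcomp Require Import all_classical all_reals all_analysis.
Set Implicit Arguments. Unset Strict Implicit. Unset Printing Implicit Defensive.
Import Order.TTheory GRing.Theory Num.Theory.
Local Open Scope classical_set_scope.
Local Open Scope ring_scope.

Section Lp.
Variables (R : realType) (A : choiceType) (p : R).

Definition in_lp (f : A -> R) : Prop :=
  (\esum_(a in [set: A]) ((`|f a| `^ p)%:E) < +oo)%E.

Definition lp_norm (f : A -> R) : R :=
  (fine (\esum_(a in [set: A]) ((`|f a| `^ p)%:E))) `^ p^-1.

Definition unit_vec (a : A) : A -> R := fun b => if b == a then 1 else 0.

(* P : l_p(A) -> l_p(A), represented as a map on functions, constrained on l_p *)
Definition lp_linear (P : (A -> R) -> (A -> R)) : Prop :=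
  (forall f, in_lp f -> in_lp (P f)) /\
  (forall f g, in_lp f -> in_lp g -> P (f \+ g) = P f \+ P g) /\
  (forall (c : R) f, in_lp f -> P (fun a => c * f a) = (fun a => c * P f a)).

Definition lp_positive_projection (P : (A -> R) -> (A -> R)) : Prop :=
  lp_linear P /\
  (forall f, in_lp f -> P (P f) = P f) /\
  (forall f, in_lp f -> (forall a, 0 <= f a) -> forall a, 0 <= P f a).

Definition lp_contractive (P : (A -> R) -> (A -> R)) : Prop :=
  forall f, in_lp f -> lp_norm (P f) <= lp_norm f.

Definition const_diag (P : (A -> R) -> (A -> R)) (alpha : R) : Prop :=
  forall a, P (unit_vec a) a = alpha.

End Lp.

(* Main.v *)
Require Import Defs.
From HB Require Import structures.
From mathcomp Require Import all_boot all_order all_algebra.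
From mathcomp Require Import all_classical all_reals all_analysis.
From mathcomp Require Import finmap ring lra.

Set Implicit Arguments. Unset Strict Implicit. Unset Printing Implicit Defensive.
Import Order.TTheory GRing.Theory Num.Theory.
Local Open Scope classical_set_scope.
Local Open Scope ring_scope.
Section R1.
Variable R : realType.
Lemma powR_exp (x q : R) : 0 < x -> x `^ q = expR (q * ln x).
Proof. by move=> x0; rewrite /powR gt_eqF. Qed.
Lemma ln1D_ge (s : R) : 0 <= s -> s / (1 + s) <= ln (1 + s).
Proof.
move=> s0.
have h1 : 0 < 1 + s by lra.
have := @le_ln1Dx R (- (s / (1 + s))).
have e : 1 + - (s / (1 + s)) = (1 + s)^-1.
  by field; lra.
rewrite e lnV ?posrE // => H.
have : -1 < - (s / (1 + s)).
  rewrite ltrN2 ltr_pdivrMr //; lra.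
move/H; lra.
Qed.

Lemma expR_le_inv (y : R) : y < 1 -> expR y <= (1 - y)^-1.
Proof.
move=> y1.
have := expR_ge1Dx (- y); rewrite expRN => H.
rewrite -[X in X <= _]invrK lef_pV2 ?posrE ?expR_gt0 ?invr_gt0 ?expR_gt0 //; lra.
Qed.

Lemma key_real (p a V : R) : 1 <= p -> 0 < a -> 0 <= V ->
  (forall s, 0 < s -> (1 + s) `^ p * V <= V - a `^ p + (a + s) `^ p) ->
  V <= a `^ (p - 1).
Proof.
move=> p1 a0 V0 H.
have p0 : 0 < p by lra.
set W := a `^ (p - 1).
have W0 : 0 < W by rewrite powR_gt0.
have aW : a `^ p = a * W by rewrite /W mulr_powRB1 // ltW.
have est : forall s, 0 < s -> p * s / a < 1 -> V * (1 - p * s / a) <= W * (1 + s).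
  move=> s s0 ys.
  set y := p * s / a.
  have h1 : 1 + p * (s / (1 + s)) <= (1 + s) `^ p.
    rewrite powR_exp; last lra.
    apply: le_trans (expR_ge1Dx _).
    rewrite lerD2l ler_pM2l //; exact: ln1D_ge (ltW s0).
  have h2 : (a + s) `^ p <= a `^ p * (1 - y)^-1.
    have -> : a + s = a * (1 + s / a) by field; lra.
    rewrite powRM; [|lra|]; last first.
      have : 0 <= s / a by rewrite divr_ge0 // ltW.
      lra.
    rewrite ler_pM2l ?powR_gt0 //.
    rewrite powR_exp; last first.
      have : 0 <= s / a by rewrite divr_ge0 // ltW.
      lra.
    apply: le_trans (expR_le_inv ys).
    rewrite ler_expR /y -mulrA ler_pM2l //.
    apply: le_ln1Dx.
    have : 0 <= s / a by rewrite divr_ge0 // ltW.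
    lra.
  have y0 : 0 < y by rewrite /y divr_gt0 // mulr_gt0.
  have hy : 0 < 1 - y by move: ys; rewrite /y; lra.
  have := H s s0.
  move: h1 h2; rewrite aW.
  set E1 := (1 + s) `^ p; set E2 := (a + s) `^ p => h1 h2 h3.
  have h4 : V * (1 + p * (s / (1 + s))) <= V - a * W + a * W * (1 - y)^-1.
    have h4a : (1 + p * (s / (1 + s))) * V <= E1 * V by apply: ler_wpM2r.
    rewrite mulrC; lra.
  have e1 : a * W * (1 - y)^-1 - a * W = a * W * y / (1 - y) by field; lra.
  have h5 : V * (p * (s / (1 + s))) <= a * W * y / (1 - y).
    rewrite -e1; move: h4; rewrite mulrDr mulr1; lra.
  have e2' : a * y = p * s.
    by rewrite /y mulrC divfK // gt_eqF.
  have e2 : a * W * y / (1 - y) = W * (p * s) / (1 - y).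
    by rewrite -e2'; ring.
  rewrite e2 in h5.
  have e3 : V * (p * (s / (1 + s))) = (p * s) * (V / (1 + s)) by field; lra.
  rewrite e3 in h5.
  have e4 : W * (p * s) / (1 - y) = (p * s) * (W / (1 - y)) by field; lra.
  rewrite e4 in h5.
  have ps0 : 0 < p * s by rewrite mulr_gt0.
  rewrite ler_pM2l // in h5.
  rewrite ler_pdivrMr in h5; last lra.
  rewrite mulrAC ler_pdivlMr in h5; last lra.
  exact: h5.
rewrite leNgt; apply/negP => VW.
pose s := (V - W) / (2 * (W + V * p / a)).
have D0 : 0 < W + V * p / a.
  have : 0 <= V * p / a by apply: divr_ge0; [apply: mulr_ge0|]; lra.
  lra.
have s0 : 0 < s by rewrite /s divr_gt0 //; lra.
have es : s * (W + V * p / a) = (V - W) / 2.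
  have Wa : 0 < W * a + V * p by apply: ltr_pwDl; [apply: mulr_gt0|apply: mulr_ge0]; lra.
  rewrite /s; field; apply/andP; split; lra.
have ys : p * s / a < 1.
  have V0' : 0 < V by lra.
  have : V * (p * s / a) < V.
    have -> : V * (p * s / a) = s * (V * p / a) by field; lra.
    have : s * (V * p / a) <= s * (W + V * p / a).
      rewrite ler_pM2l //; lra.
    lra.
  rewrite -{2}[V]mulr1 ltr_pM2l //.
have := est s s0 ys.
have -> : V * (1 - p * s / a) = V - s * (V * p / a) by field; lra.
have : s * (W + V * p / a) = s * W + s * (V * p / a) by rewrite mulrDr.
lra.
Qed.
End R1.

Section LpInfra.
Variables (R : realType) (A : choiceType) (p : R).
Hypothesis p1 : 1 <= p.
Implicit Types f g : A -> R.

Definition N (f : A -> R) : \bar R := (\esum_(a in [set: A]) ((`|f a| `^ p)%:E))%E.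
Lemma in_lpE f : in_lp p f = (N f < +oo)%E. Proof. by []. Qed.

Lemma lp_normE (f : A -> R) : lp_norm p f = (fine (N f)) `^ p^-1. Proof. by []. Qed.

Lemma p_gt0 : 0 < p. Proof. by apply: lt_le_trans p1. Qed.

Lemma N_ge0 f : (0 <= N f)%E.
Proof. by rewrite /N; apply: esum_ge0 => x _; rewrite lee_fin powR_ge0. Qed.

Lemma N_fin f : in_lp p f -> N f = (fine (N f))%:E.
Proof. by move=> h; rewrite fineK // ge0_fin_numE // N_ge0. Qed.

Lemma esum_split (phi : A -> \bar R) (S : set A) : finite_set S ->
  (forall x, (0 <= phi x)%E) ->
  \esum_(x in [set: A]) phi x =
  (\sum_(x \in S) phi x + \esum_(x in [set: A]) (if x \in S then 0 else phi x))%E.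
Proof.
move=> fS ph0.
rewrite (esumID S) ?setTI; last by move=> i _; exact: ph0.
rewrite esum_fset //; congr (_ + _)%E.
rewrite esum_mkcond; apply: eq_esum => x _.
by rewrite in_setC; case: (x \in S).
Qed.

Lemma esum_supp (phi : A -> \bar R) (S : set A) : finite_set S ->
  (forall x, (0 <= phi x)%E) -> (forall x, ~ S x -> phi x = 0%E) ->
  \esum_(x in [set: A]) phi x = (\sum_(x \in S) phi x)%E.
Proof.
move=> fS ph0 hS; rewrite (esum_split fS) // esum1 ?adde0 // => x _.
case: ifPn => // /negP xS; apply: hS => Sx; apply: xS; exact: mem_set.
Qed.

Lemma N_le f g : (forall x, `|g x| <= `|f x|) -> (N g <= N f)%E.
Proof.
rewrite /N; move=> h; apply: le_esum => x _; rewrite lee_fin.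
by apply: ge0_ler_powR => //; [exact: ltW p_gt0| rewrite nnegrE ..].
Qed.

Lemma in_lp_le f g : (forall x, `|g x| <= `|f x|) -> in_lp p f -> in_lp p g.
Proof. by move=> h; rewrite /in_lp; apply: le_lt_trans (N_le h). Qed.

Lemma esum_scale_le (k : R) (a : A -> R) : 0 <= k -> (forall x, 0 <= a x) ->
  (\esum_(x in [set: A]) (k * a x)%:E <= k%:E * \esum_(x in [set: A]) (a x)%:E)%E.
Proof.
move=> k0 a0; apply: ge_ereal_sup => _ [X [fX _] <-].
rewrite fsbig_finite //= sumEFin -mulr_sumr EFinM.
apply: lee_wpmul2l; first by rewrite lee_fin.
apply: ereal_sup_ubound; exists X => //.
by rewrite fsbig_finite //= sumEFin.
Qed.

Lemma in_lp_scale (c : R) f : in_lp p f -> in_lp p (fun x => c * f x).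
Proof.
move=> hf; rewrite /in_lp.
have e : forall x, `|c * f x| `^ p = `|c| `^ p * `|f x| `^ p.
  by move=> x; rewrite normrM powRM.
under eq_esum do rewrite e.
apply: le_lt_trans (esum_scale_le (powR_ge0 _ _) (fun x => powR_ge0 _ _)) _.
by apply: lte_mul_pinfty => //; rewrite lee_fin powR_ge0.
Qed.

Lemma in_lp_add f g : in_lp p f -> in_lp p g -> in_lp p (f \+ g).
Proof.
move=> hf hg; rewrite /in_lp.
have e : forall x, `|(f \+ g) x| `^ p <= 2 `^ p * (`|f x| `^ p + `|g x| `^ p).
  move=> x /=.
  have h1 : `|f x + g x| <= 2 * Num.max `|f x| `|g x|.
    apply: le_trans (ler_normD _ _) _.
    rewrite mulr2n mulrDl mul1r; apply: lerD; by rewrite le_max lexx ?orbT.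
  have mx0 : 0 <= Num.max `|f x| `|g x| by rewrite le_max normr_ge0.
  have h2 : `|f x + g x| `^ p <= (2 * Num.max `|f x| `|g x|) `^ p.
    by apply: ge0_ler_powR => //; [exact: ltW p_gt0| rewrite nnegrE ?mulr_ge0].
  apply: le_trans h2 _.
  rewrite powRM // ?le_max ?normr_ge0 //.
  apply: ler_wpM2l; first exact: powR_ge0.
  case: (leP `|f x| `|g x|) => _.
  - by rewrite lerDr powR_ge0.
  - by rewrite lerDl powR_ge0.
have H1 : (N (f \+ g) <= esum [set: A] (fun x => (2 `^ p * (`|f x| `^ p + `|g x| `^ p))%:E))%O.
  by apply: le_esum => x _; rewrite lee_fin; exact: e.
apply: le_lt_trans H1 _.
apply: le_lt_trans (esum_scale_le (powR_ge0 _ _) _) _.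
  by move=> x; rewrite addr_ge0 // powR_ge0.
apply: lte_mul_pinfty => //.
under eq_esum do rewrite EFinD.
rewrite esumD; last by move=> *; rewrite lee_fin powR_ge0.
  exact: lte_add_pinfty.
by move=> *; rewrite lee_fin powR_ge0.
Qed.


Lemma in_lp_supp f (S : set A) : finite_set S -> (forall x, ~ S x -> f x = 0) ->
  in_lp p f.
Proof.
move=> fS hS; rewrite in_lpE /N (@esum_supp (fun a => (`|f a| `^ p)%:E) S) //.
all: try by rewrite fsumEFin // ltry.
all: move=> x; try by rewrite lee_fin powR_ge0.
by move=> /hS ->; rewrite normr0 powR0 // gt_eqF // p_gt0.
Qed.

Lemma in_lp0 : in_lp p (fun _ : A => 0).
Proof. by apply: (@in_lp_supp _ set0) => //; exact: finite_set0. Qed.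

Lemma in_lp_unit (a : A) : in_lp p (unit_vec R a).
Proof.
apply: (@in_lp_supp _ [set a]); first exact: finite_set1.
by move=> x; rewrite /unit_vec; case: eqP.
Qed.

Lemma in_lp_abs f : in_lp p f -> in_lp p (fun x => `|f x|).
Proof. by apply: in_lp_le => x; rewrite normr_id. Qed.

Lemma in_lp_opp f : in_lp p f -> in_lp p (fun x => - f x).
Proof. by apply: in_lp_le => x; rewrite normrN. Qed.

Lemma in_lp_sub f g : in_lp p f -> in_lp p g -> in_lp p (fun x => f x - g x).
Proof. by move=> hf /in_lp_opp hg; apply: (in_lp_add hf hg). Qed.

Definition comb (s : seq A) (l : A -> R) : A -> R :=
  fun x => \sum_(b <- s) l b * unit_vec R b x.

Lemma in_lp_comb s l : in_lp p (comb s l).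
Proof.
elim: s => [|b s IH].
  by apply: in_lp_le in_lp0 => x; rewrite /comb big_nil.
have -> : comb (b :: s) l = (fun x => l b * unit_vec R b x) \+ comb s l.
  by apply: funext => x; rewrite /comb big_cons.
exact: in_lp_add (in_lp_scale _ (in_lp_unit _)) IH.
Qed.

Section Op.
Variables (P : (A -> R) -> (A -> R)).
Hypothesis HL : lp_linear p P.

Lemma Padd f g : in_lp p f -> in_lp p g -> P (f \+ g) = P f \+ P g.
Proof. by case: HL => _ [h _]; apply: h. Qed.

Lemma Pscale c f : in_lp p f -> P (fun a => c * f a) = (fun a => c * P f a).
Proof. by case: HL => _ [_ h]; apply: h. Qed.

Lemma P_lp f : in_lp p f -> in_lp p (P f).
Proof. by case: HL => h _; apply: h. Qed.

Lemma P0 : P (fun _ => 0) = (fun _ => 0).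
Proof.
have := Pscale 0 in_lp0.
have -> : (fun _ : A => 0 * (0 : R)) = (fun _ => 0) by apply: funext => x; rewrite mul0r.
by move=> ->; apply: funext => x; rewrite mul0r.
Qed.

Lemma Psub f g : in_lp p f -> in_lp p g ->
  P (fun x => f x - g x) = (fun x => P f x - P g x).
Proof.
move=> hf hg.
have -> : (fun x => f x - g x) = f \+ (fun x => -1 * g x).
  by apply: funext => x /=; rewrite mulN1r.
rewrite Padd //; last exact: in_lp_scale.
by rewrite Pscale //; apply: funext => x /=; rewrite mulN1r.
Qed.

Lemma P_comb s l :
  P (comb s l) = (fun x => \sum_(b <- s) l b * P (unit_vec R b) x).
Proof.
elim: s => [|b s IH].
  have -> : comb [::] l = (fun _ => 0) by apply: funext => x; rewrite /comb big_nil.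
  by rewrite P0; apply: funext => x; rewrite big_nil.
have -> : comb (b :: s) l = (fun x => l b * unit_vec R b x) \+ comb s l.
  by apply: funext => x; rewrite /comb big_cons.
rewrite Padd ?IH ?Pscale //; [|exact: in_lp_unit|exact: in_lp_scale (in_lp_unit _)|exact: in_lp_comb].
by apply: funext => x /=; rewrite big_cons.
Qed.

Lemma Popp f : in_lp p f -> P (fun x => - f x) = (fun x => - P f x).
Proof.
move=> hf; have := Pscale (-1) hf.
have -> : (fun a => -1 * f a) = (fun x => - f x) by apply: funext => x; rewrite mulN1r.
by move=> ->; apply: funext => x; rewrite mulN1r.
Qed.

Hypothesis Hpos : forall f, in_lp p f -> (forall a, 0 <= f a) -> forall a, 0 <= P f a.

Lemma Pmono f g : in_lp p f -> in_lp p g -> (forall x, g x <= f x) ->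
  forall x, P g x <= P f x.
Proof.
move=> hf hg hgf x.
have := Hpos (in_lp_sub hf hg) (fun a => (_ : 0 <= f a - g a)) x.
rewrite Psub //; rewrite subr_ge0 => h; apply: h.
by move=> a; rewrite subr_ge0.
Qed.

End Op.

Section Struct.
Variables (P : (A -> R) -> (A -> R)) (alpha : R).
Hypotheses (HP : lp_positive_projection p P) (HC : lp_contractive p P)
  (HD : const_diag P alpha) (Ha : 0 < alpha).

Let HL : lp_linear p P. Proof. by case: HP. Qed.
Let Hproj : forall f, in_lp p f -> P (P f) = P f. Proof. by case: HP => _ []. Qed.
Let Hpos : forall f, in_lp p f -> (forall a, 0 <= f a) -> forall a, 0 <= P f a.
Proof. by case: HP => _ []. Qed.

Definition c (b : A) := P (unit_vec R b).
Definition t (x b : A) := c b x.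

Lemma c_lp b : in_lp p (c b).
Proof. rewrite /c; exact: (P_lp HL (in_lp_unit b)). Qed.

Lemma t_ge0 x b : 0 <= t x b.
Proof.
apply: Hpos; first exact: in_lp_unit.
by move=> z; rewrite /unit_vec; case: eqP.
Qed.

Lemma c_proj b : P (c b) = c b.
Proof. exact: Hproj (in_lp_unit b). Qed.

Lemma t_diag b : t b b = alpha.
Proof. exact: HD. Qed.

Lemma contr f : in_lp p f -> fine (N (P f)) <= fine (N f).
Proof.
move=> hf; have h := HC hf.
have e : forall y : R, 0 <= y -> (y `^ p^-1) `^ p = y.
  by move=> y y0; rewrite -powRrM mulVf ?powRr1 // gt_eqF // p_gt0.
have x0 : 0 <= fine (N (P f)) by apply: fine_ge0; exact: N_ge0.
have y0 : 0 <= fine (N f) by apply: fine_ge0; exact: N_ge0.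
have n1 : lp_norm p (P f) \in Num.nneg by rewrite nnegrE lp_normE powR_ge0.
have n2 : lp_norm p f \in Num.nneg by rewrite nnegrE lp_normE powR_ge0.
have h2 := @ge0_ler_powR _ p (ltW p_gt0) (lp_norm p (P f)) (lp_norm p f) n1 n2 h.
move: h2; rewrite !lp_normE => h3.
by rewrite -[X in X <= _](e _ x0) -[X in _ <= X](e _ y0).
Qed.

Lemma range_abs f : in_lp p f -> P f = f ->
  P (fun x => `|f x|) = (fun x => `|f x|).
Proof.
move=> hf hPf.
set g := fun x => `|f x|.
have hg : in_lp p g := in_lp_abs hf.
have h1 : forall x, `|f x| <= P g x.
  move=> x; rewrite ler_norml; apply/andP; split.
  - have hle : forall z, - f z <= g z by move=> z; rewrite /g -normrN ler_norm.
    have := Pmono HL Hpos hg (in_lp_opp hf) hle x.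
    by rewrite (Popp HL hf) hPf lerNl.
  - have hle : forall z, f z <= g z by move=> z; rewrite /g ler_norm.
    have := Pmono HL Hpos hg hf hle x.
    by rewrite hPf.
have hPg := P_lp HL hg.
apply: funext => y; apply/eqP; rewrite eq_le h1 andbT leNgt; apply/negP => lt.
have := contr hg; apply/negP; rewrite -ltNge.
rewrite -lte_fin -!N_fin //.
have ph0 : forall h : A -> R, forall x, (0 <= (`|h x| `^ p)%:E)%E.
  by move=> h x; rewrite lee_fin powR_ge0.
rewrite /N (esum_split (finite_set1 y) (ph0 g)) (esum_split (finite_set1 y) (ph0 (P g))).
rewrite !fsbig_set1.
apply: lte_leD.
- rewrite ge0_fin_numE; last by apply: esum_ge0 => x _; case: ifP => // _; exact: ph0.
  apply: le_lt_trans hg; apply: le_esum => x _; case: ifP => // _; exact: ph0.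
- rewrite lte_fin; apply: gt0_ltr_powR; first exact: p_gt0.
  + by rewrite nnegrE.
  + by rewrite nnegrE.
  have Pgy0 : 0 < P g y by apply: le_lt_trans lt; exact: normr_ge0.
  by rewrite /g normr_id (gtr0_norm Pgy0).
- apply: le_esum => x _; case: ifP => // _; rewrite lee_fin.
  apply: ge0_ler_powR; first exact/ltW/p_gt0.
  + by rewrite nnegrE.
  + by rewrite nnegrE.
  rewrite /g normr_id; apply: le_trans (h1 x) _; exact: ler_norm.
Qed.

Lemma pos_range_ge g : in_lp p g -> P g = g -> (forall x, 0 <= g x) ->
  forall x y, g x * t y x <= g y.
Proof.
move=> hg hPg g0 x y.
have hle : forall z, g x * unit_vec R x z <= g z.
  by move=> z; rewrite /unit_vec; case: eqP => [->|_]; rewrite ?mulr1 ?mulr0.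
have := Pmono HL Hpos hg (in_lp_scale (g x) (in_lp_unit x)) hle y.
by rewrite Pscale ?hPg //; exact: in_lp_unit.
Qed.


Lemma t_trans x a y : 0 < t x a -> 0 < t y x -> 0 < t y a.
Proof.
move=> hxa hyx.
have := pos_range_ge (c_lp a) (c_proj a) (fun z => t_ge0 z a) x y.
by move=> h; apply: lt_le_trans h; exact: mulr_gt0.
Qed.

Lemma g_range a b mu : let g := fun z => c a z - mu * c b z in
  in_lp p g /\ P g = g.
Proof.
move=> g; have hg : in_lp p g := in_lp_sub (c_lp a) (in_lp_scale mu (c_lp b)).
split => //.
rewrite /g (Psub HL (c_lp a) (in_lp_scale mu (c_lp b))) (Pscale HL mu (c_lp b)).
by rewrite !c_proj.
Qed.

Lemma t_sym x a : 0 < t x a -> 0 < t a x.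
Proof.
move=> hxa; rewrite lt_neqAle t_ge0 andbT eq_sym; apply/negP => /eqP hax.
have [hg hPg] := g_range a x (t x a / alpha).
set g := fun z => _ in hg hPg.
have hga : g a = alpha.
  by rewrite /g; have := t_diag a; rewrite /t => ->; move: hax; rewrite /t => ->; rewrite mulr0 subr0.
have hgx : g x = 0.
  by rewrite /g /t; have := t_diag x; rewrite /t => ->; rewrite divfK ?subrr // gt_eqF.
have := pos_range_ge (in_lp_abs hg) (range_abs hg hPg) (fun z => normr_ge0 _) a x.
rewrite hga hgx normr0 (gtr0_norm Ha) => h.
have : 0 < alpha * t x a by rewrite mulr_gt0.
by rewrite ltNge h.
Qed.

Lemma t_class y a b : 0 < t b a -> 0 < t y a -> 0 < t b y.
Proof. by move=> hba hya; apply: t_trans (t_sym hya) hba. Qed.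

Lemma t_zero x a : ~~ (0 < t x a) -> t x a = 0.
Proof. by move=> h; apply/eqP; rewrite eq_le t_ge0 andbT leNgt. Qed.

Lemma t_prop a b : 0 < t b a -> forall z, t z a = t b a / alpha * t z b.
Proof.
move=> hba.
have [hg hPg] := g_range a b (t b a / alpha).
set g := fun z => _ in hg hPg.
have hgb : g b = 0.
  by rewrite /g /t; have := t_diag b; rewrite /t => ->; rewrite divfK ?subrr // gt_eqF.
suff H : forall z, g z = 0.
  by move=> z; have := H z; rewrite /g /t => /eqP; rewrite subr_eq0 => /eqP.
move=> z; case: (eqVneq (g z) 0) => // gz; exfalso.
have hzb : 0 < t b z.
  case: (boolP (0 < t z a)) => [hza|/t_zero hza]; first exact: t_class hba hza.
  apply: t_sym; rewrite lt_neqAle t_ge0 andbT eq_sym; apply/negP => /eqP hzb.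
  by move: gz; rewrite /g; move: hza hzb; rewrite /t => -> ->; rewrite mulr0 subr0 eqxx.
have := pos_range_ge (in_lp_abs hg) (range_abs hg hPg) (fun w => normr_ge0 _) z b.
rewrite hgb normr0 => h.
have : 0 < `|g z| * t b z by rewrite mulr_gt0 // normr_gt0.
by rewrite ltNge h.
Qed.

Lemma t_prod a b : 0 < t b a -> t a b * t b a = alpha ^+ 2.
Proof.
move=> hba; have := t_prop hba a; rewrite t_diag => e.
have an : alpha != 0 by rewrite gt_eqF.
rewrite expr2 {1}e; field; exact: an.
Qed.


Lemma comb_uniq (s : seq A) l x : uniq s ->
  comb s l x = if x \in s then l x else 0.
Proof.
elim: s => [|b s IH] /=; first by rewrite /comb big_nil.
move=> /andP[bs us]; rewrite /comb big_cons -/(comb s l x) IH // in_cons.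
rewrite /unit_vec; case: (eqVneq x b) => [->|xb] /=.
  by rewrite (negbTE bs) ?eqxx mulr1 addr0.
by rewrite mulr0 add0r.
Qed.

Lemma sum_const_seq (s : seq A) (k : R) : \sum_(b <- s) k = (size s)%:R * k.
Proof.
elim: s => [|b s IH]; first by rewrite big_nil mul0r.
by rewrite big_cons IH /= -addn1 natrD mulrDl mul1r addrC.
Qed.

Definition Bset (a : A) : set A := [set x | 0 < t x a].

Lemma P_comb_t a (s : seq A) : {subset s <= Bset a} ->
  P (comb s (fun b => t b a)) a = (size s)%:R * alpha ^+ 2.
Proof.
move=> sB; rewrite (P_comb HL) -sum_const_seq.
rewrite big_seq [RHS]big_seq; apply: eq_bigr => b /sB hb.
by rewrite -(t_prod (set_mem hb)) mulrC.
Qed.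

Lemma size_bound a (s : seq A) : uniq s -> {subset s <= Bset a} ->
  (size s)%:R * alpha ^+ 2 <= alpha.
Proof.
move=> us sB.
have hle : forall x, comb s (fun b => t b a) x <= c a x.
  by move=> x; rewrite comb_uniq //; case: ifP => _ //; exact: t_ge0.
have := Pmono HL Hpos (c_lp a) (in_lp_comb s _) hle a.
by rewrite P_comb_t // c_proj; have := t_diag a; rewrite /t => ->.
Qed.

Lemma Bset_fin a : finite_set (Bset a).
Proof.
case: (pselect (finite_set (Bset a))) => // inf.
pose n := (Num.trunc (alpha^-1)).+1.
have [B BA Bn] := infinite_set_fset n inf.
have := size_bound (fset_uniq B) (fun x xB => mem_set (BA x xB)).
have hn : alpha^-1 < n%:R by exact: truncnS_gt.
have : n%:R <= (size B)%:R :> R by rewrite ler_nat.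
move=> h1 h2; exfalso.
have : alpha^-1 * alpha^+2 < (size B)%:R * alpha^+2.
  by rewrite ltr_pM2r ?exprn_gt0 //; apply: lt_le_trans h1.
have e : alpha^-1 * alpha^+2 = alpha.
  by rewrite expr2 mulrA mulVf ?mul1r // gt_eqF.
by rewrite e ltNge h2.
Qed.

Lemma in_Bset a x : (x \in fset_set (Bset a)) = (0 < t x a).
Proof.
rewrite in_fset_set; last exact: Bset_fin.
by apply/idP/idP => [/set_mem|h]; [|apply/mem_set].
Qed.

Lemma c_comb a : c a = comb (fset_set (Bset a)) (fun b => t b a).
Proof.
apply: funext => x; rewrite comb_uniq ?fset_uniq // in_Bset.
by case: ifPn => // /t_zero.
Qed.

Lemma card_block a : (#|` fset_set (Bset a)|)%:R * alpha = 1.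
Proof.
have := c_proj a; rewrite {1}c_comb => /(congr1 (fun h => h a)).
rewrite P_comb_t; last by move=> x; rewrite in_Bset => h; apply: mem_set.
have := t_diag a; rewrite /t => -> e.
have an : alpha != 0 by rewrite gt_eqF.
apply: (mulIf an); rewrite mul1r -mulrA -expr2; exact: e.
Qed.


Lemma argmin_seq (s : seq A) (f : A -> R) x0 : x0 \in s ->
  exists2 b, b \in s & forall x, x \in s -> f b <= f x.
Proof.
elim: s x0 => [//|y s IH] x0 _.
case: s IH => [|z s] IH.
  exists y; first exact: mem_head.
  by move=> x; rewrite inE => /eqP ->.
have [b bs hb] := IH z (mem_head _ _).
case: (leP (f y) (f b)) => h.
  exists y; first exact: mem_head.
  move=> x; rewrite in_cons => /orP[/eqP->//|xs].
  exact: le_trans h (hb x xs).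
exists b; first by rewrite in_cons bs orbT.
move=> x; rewrite in_cons => /orP[/eqP->|xs]; [exact: ltW | exact: hb].
Qed.

Lemma fineN_supp h (S : set A) : finite_set S -> (forall x, ~ S x -> h x = 0) ->
  fine (N h) = \sum_(x <- fset_set S) `|h x| `^ p.
Proof.
move=> fS hS.
rewrite /N (@esum_supp (fun a => (`|h a| `^ p)%:E) S) //.
all: try by rewrite fsbig_finite // sumEFin.
all: move=> x; try by rewrite lee_fin powR_ge0.
by move=> /hS ->; rewrite normr0 powR0 // gt_eqF // p_gt0.
Qed.

Lemma t_val a x : 0 < t x a -> t x a = alpha.
Proof.
move=> hxa.
set S := fset_set (Bset a).
have nS := card_block a.
have an : alpha != 0 by rewrite gt_eqF.
have aS : a \in S by rewrite in_Bset t_diag.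
have [b bS hb] := argmin_seq (fun y => t y a) aS.
have hba : 0 < t b a by rewrite -in_Bset.
have hab : 0 < t a b := t_sym hba.
have ban : t b a != 0 by rewrite gt_eqF.
have e2 : t a b = alpha^+2 / t b a by rewrite -(t_prod hba) mulfK.
have tb : forall z, t z b = alpha / t b a * t z a.
  by move=> z; rewrite (t_prop hab z) e2; congr (_ * _); field; rewrite an ban.
have supp_b : forall z, (0 < t z b) = (0 < t z a).
  move=> z; apply/idP/idP => h.
    exact: t_trans hba h.
  exact: t_trans hab h.
have tb_ge : forall z, z \in S -> alpha <= t z b.
  move=> z zS.
  have e : alpha = alpha / t b a * t b a by rewrite divfK.
  rewrite tb {1}e ler_pM2l; [exact: hb | by rewrite divr_gt0].
have Bb : forall z, ~ Bset a z -> t z b = 0.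
  move=> z hz; apply: t_zero; rewrite supp_b; apply/negP => h; exact: hz.
have bB : Bset a b by [].
set V := \sum_(x <- S) t x b `^ p.
have key : forall s : R, 0 < s -> (1 + s) `^ p * V <= V - alpha `^ p + (alpha + s) `^ p.
  move=> s s0.
  pose g := fun z => c b z + s * unit_vec R b z.
  have hg : in_lp p g := in_lp_add (c_lp b) (in_lp_scale s (in_lp_unit b)).
  have hPg : P g = (fun z => (1 + s) * c b z).
    rewrite /g (Padd HL (c_lp b) (in_lp_scale s (in_lp_unit b))).
    rewrite (Pscale HL s (in_lp_unit b)) c_proj.
    by apply: funext => z /=; rewrite -/(c b) mulrDl mul1r.
  have := contr hg; rewrite hPg.
  rewrite (@fineN_supp _ (Bset a) (Bset_fin a)); last first.
    by move=> z /Bb; rewrite /t => ->; rewrite mulr0.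
  rewrite (@fineN_supp _ (Bset a) (Bset_fin a)); last first.
    move=> z hz; rewrite /g; have := Bb z hz; rewrite /t => ->.
    rewrite /unit_vec; case: eqP => [zb|_]; last by rewrite mulr0 addr0.
    by exfalso; apply: hz; rewrite zb.
  rewrite -/S.
  have -> : \sum_(x <- S) `|(1 + s) * c b x| `^ p = (1 + s) `^ p * V.
    rewrite /V mulr_sumr; apply: eq_bigr => z _.
    rewrite ger0_norm; last by rewrite mulr_ge0 //; [lra| exact: t_ge0].
    by rewrite powRM //; [lra| exact: t_ge0].
  rewrite (bigD1_seq b) ?fset_uniq //=.
  rewrite /V (bigD1_seq b) ?fset_uniq //=.
  have -> : \sum_(i <- S | i != b) `|g i| `^ p = \sum_(i <- S | i != b) t i b `^ p.
    apply: eq_bigr => z zb; rewrite /g /unit_vec (negbTE zb) mulr0 addr0.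
    by rewrite ger0_norm //; exact: t_ge0.
  rewrite /g /unit_vec eqxx mulr1 -/(t b b) t_diag ger0_norm; last by rewrite addr_ge0 // ltW.
  lra.

have VW : V <= alpha `^ (p - 1).
  apply: key_real => //; first by rewrite /V sumr_ge0 // => z _; exact: powR_ge0.
have Wsum : alpha `^ (p - 1) = \sum_(x <- S) alpha `^ p.
  by rewrite sum_const_seq -(mulr_powRB1 (ltW Ha) p_gt0) mulrA -/(#|` S|) nS mul1r.
have hsum : \sum_(x <- S | x \in S) (t x b `^ p - alpha `^ p) == 0.
  rewrite -big_seq sumrB -/V -Wsum subr_eq0 eq_le VW /=.
  rewrite Wsum /V big_seq [X in _ <= X]big_seq; apply: ler_sum => z zS.
  apply: ge0_ler_powR; first exact/ltW/p_gt0.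
  - by rewrite nnegrE ltW.
  - by rewrite nnegrE t_ge0.
  exact: tb_ge.
have tval : forall z, z \in S -> t z b = alpha.
  move: hsum; rewrite psumr_eq0 => [/allP H z zS|z zS]; last first.
    rewrite subr_ge0; apply: ge0_ler_powR; first exact/ltW/p_gt0.
    - by rewrite nnegrE ltW.
    - by rewrite nnegrE t_ge0.
    exact: tb_ge.
  have := H z zS; rewrite zS /= subr_eq0 => /eqP e.
  apply: (powR_injective p_gt0) e; rewrite nnegrE ?t_ge0 //; exact: ltW.
have tab : t a b = alpha := tval a aS.
have tba : t b a = alpha.
  have := t_prod hba; rewrite tab expr2 => e; by apply: (mulfI an).
by rewrite (t_prop hba x) tba divff // mul1r; apply: tval; rewrite in_Bset.
Qed.


Lemma t_row a b : t a b = if 0 < t b a then alpha else 0.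
Proof.
case: ifPn => h; first exact: t_val (t_sym h).
apply: t_zero; apply/negP => h'; move/negP: h; apply; exact: t_sym h'.
Qed.

Lemma coord g x : in_lp p g -> `|g x| `^ p <= fine (N g).
Proof.
move=> hg; rewrite -lee_fin -N_fin //.
apply: esum_ge; exists [set x]; first by split => //; exact: finite_set1.
by rewrite fsbig_set1.
Qed.

Lemma P_formula f a : in_lp p f -> P f a = alpha * \sum_(b \in Bset a) f b.
Proof.
move=> hf.
set S := Bset a.
have fS : finite_set S := Bset_fin a.
set L := alpha * \sum_(b \in S) f b.
suff H : forall eps, 0 < eps -> `|P f a - L| `^ p <= eps.
  apply/eqP; rewrite -subr_eq0 -normr_eq0; case: (eqVneq `|P f a - L| 0) => // d0; exfalso.
  have dp : 0 < `|P f a - L| `^ p by apply: powR_gt0; rewrite lt0r d0 normr_ge0.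
  have := H _ (divr_gt0 dp (ltr0n _ 2)).
  lra.
move=> eps e0.
set phi := fun x => (`|f x| `^ p)%:E.
have hN := N_fin hf.
have : ((fine (N f) - eps)%:E < N f)%E by rewrite hN lte_fin; lra.
rewrite {2}/N /esum => /ereal_sup_gt [_ [X [fX _] <-]] hX.
set G := X `|` S.
have fG : finite_set G by rewrite finite_setU.
pose h := fun x => if x \in G then 0 else f x.
pose fG' := comb (fset_set G) f.
have hfG : in_lp p fG' := in_lp_comb _ _.
have hh : in_lp p h by apply: in_lp_le hf => x; rewrite /h; case: ifP; rewrite ?normr0 ?normr_ge0.
have ef : f = fG' \+ h.
  apply: funext => x; rewrite /fG' /h /= comb_uniq ?fset_uniq // in_fset_set //.
  by case: ifP; rewrite ?addr0 ?add0r.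
have PfG : P fG' a = L.
  rewrite /fG' (P_comb HL) /L.
  rewrite -(fsbig_fwiden (fset_set G) S (fun b => f b * t a b)); last 3 first.
  - by move=> x Sx /=; rewrite in_fset_set //; apply/mem_set; right.
  - exact: fset_uniq.
  - move=> x [/= xG xS] /=; rewrite t_row; case: ifP => [h0|_]; last by rewrite mulr0.
    by exfalso; apply: xS.
  rewrite !fsbig_finite // mulr_sumr big_seq [RHS]big_seq; apply: eq_bigr => b.
  rewrite in_fset_set // => /set_mem Sb.
  by rewrite t_row ifT // mulrC.
have ePf : P f a = L + P h a by rewrite {1}ef (Padd HL hfG hh) /= PfG.
rewrite ePf addrAC subrr add0r.
apply: le_trans (coord _ (P_lp HL hh)) _.
apply: le_trans (contr hh) _.
have ph0 : forall x, (0 <= phi x)%E by move=> x; rewrite lee_fin powR_ge0.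
have eN : N f = (\sum_(x \in G) phi x + N h)%E.
  rewrite {1}/N (esum_split fG ph0); congr (_ + _)%E.
  rewrite /N; apply: eq_esum => x _; rewrite /h /phi.
  by case: ifP => //; rewrite normr0 powR0 // gt_eqF // p_gt0.
have hG : (\sum_(x \in X) phi x <= \sum_(x \in G) phi x)%E.
  apply: lee_fsum_nneg_subset => //.
    by move=> x /set_mem xX; apply/mem_set; left.
move: eN hX hG; rewrite /phi fsumEFin // fsumEFin // (N_fin hh) hN.
move=> eN; move: (EFin_inj eN) => {}eN; rewrite !lte_fin !lee_fin => hX hG.
lra.
Qed.


Lemma Bset_eq a b z : 0 < t z a -> 0 < t z b -> Bset a = Bset b.
Proof.
move=> za zb.
have ab : 0 < t a b := t_trans zb (t_sym za).
have ba : 0 < t b a := t_sym ab.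
apply/seteqP; split => y /= hy.
  exact: t_trans ab hy.
exact: t_trans ba hy.
Qed.

Lemma main_concl (a0 : A) :
  exists n : nat, [/\ (0 < n)%N, alpha = n%:R^-1 &
    exists Q : set (set A),
      [/\ (forall B, Q B -> (B #= `I_n)%card),
          (forall a, exists B, Q B /\ B a),
          (forall B C, Q B -> Q C -> B `&` C !=set0 -> B = C) &
          (forall f, in_lp p f -> forall B, Q B -> forall a, B a ->
             P f a = alpha * \sum_(b \in B) f b)]].
Proof.
set n := #|` fset_set (Bset a0)|.
have hn : n%:R * alpha = 1 := card_block a0.
have an : alpha != 0 by rewrite gt_eqF.
have n0 : (0 < n)%N.
  rewrite lt0n; apply/negP => /eqP n0; move: hn; rewrite n0 mul0r => /eqP.
  by rewrite eq_sym oner_eq0.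
exists n; split => //.
  have nn0 : n%:R != 0 :> R by rewrite pnatr_eq0 -lt0n.
  by apply: (mulfI nn0); rewrite hn divff.
exists [set B | exists a, B = Bset a]; split.
- move=> B [a ->]; rewrite -(fset_setK (Bset_fin a)); apply/card_eq_fsetP.
  have e : (#|` fset_set (Bset a)|%:R : R) = n%:R by apply: (mulIf an); rewrite card_block hn.
  move/eqP: e; rewrite eqr_nat => /eqP.
  by [].
- move=> a; exists (Bset a); split; first by exists a.
  by rewrite /Bset /= t_diag.
- move=> B C [a ->] [b ->] [z [za zb]]; exact: Bset_eq za zb.
- move=> f hf B [c ->] a ac.
  rewrite (P_formula a hf); congr (_ * _).
  by rewrite (@Bset_eq a c a) // t_diag.
Qed.

End Struct.
End LpInfra.


Theorem proposition3p2 (R : realType) (A : choiceType) (p : R)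
  (P : (A -> R) -> (A -> R)) (alpha : R) :
  [set: A] !=set0 -> 1 <= p ->
  lp_positive_projection p P -> lp_contractive p P ->
  const_diag P alpha -> 0 < alpha ->
  exists n : nat, [/\ (0 < n)%N, alpha = n%:R^-1 &
    exists Q : set (set A),
      [/\ (forall B, Q B -> (B #= `I_n)%card),
          (forall a, exists B, Q B /\ B a),
          (forall B C, Q B -> Q C -> B `&` C !=set0 -> B = C) &
          (forall f, in_lp p f -> forall B, Q B -> forall a, B a ->
             P f a = alpha * \sum_(b \in B) f b)]].
Proof.
move=> [a0 _] p1 HP HC HD Ha.
exact: (main_concl p1 HP HC HD Ha a0).
Qed.
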